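(* For every integer $k\ge 4$, the set $S_k$ is not complete, and there exists an uncompletable word for $S_k$ of length $5k^2-17k+13$.
   Context: $\Sigma=\{a,b\}$. $S_k=\left(\Sigma^k\setminus\{ba^{k-1},b^{k-1}a\}\right)\cup\left(\Sigma^{k-1}\setminus\{a^{k-1},b^{k-1}\}\right)$. For a finite set $S$ of words, $\mathit{Fact}(S^* )$ is the set of all factors of words in $S^*$. $S$ is complete if $\mathit{Fact}(S^* )=\Sigma^*$; a word $w\in\Sigma^*\setminus\mathit{Fact}(S^* )$ is called uncompletable for $S$. *)

(* Defs.v *)
From mathcomp Require Import all_boot.
Set Implicit Arguments. Unset Strict Implicit. Unset Printing Implicit Defensive.

Definition la : bool := false.
Definition lb : bool := true.

Definition Sk (k : nat) (w : seq bool) : bool :=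
  ((size w == k) && (w != lb :: nseq k.-1 la) && (w != rcons (nseq k.-1 lb) la))
  || ((size w == k.-1) && (w != nseq k.-1 la) && (w != nseq k.-1 lb)).

Definition in_star (S : seq bool -> bool) (w : seq bool) : Prop :=
  exists ws : seq (seq bool), all S ws /\ w = flatten ws.

Definition in_Fact (S : seq bool -> bool) (w : seq bool) : Prop :=
  exists u, in_star S u /\ infix w u.

Definition complete (S : seq bool -> bool) : Prop := forall w, in_Fact S w.

Definition uncompletable (S : seq bool -> bool) (w : seq bool) : Prop :=
  ~ in_Fact S w.

(* Main.v *)
Require Import Defs.
From mathcomp Require Import all_boot.
From Stdlib Require Import Lia.
Set Implicit Arguments. Unset Strict Implicit. Unset Printing Implicit Defensive.

Ltac mlia := repeat match goal with
 | H : is_true (_ <= _) |- _ => apply (elimT leP) in H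
 | H : is_true (_ < _) |- _ => apply (elimT ltP) in H
 | H : is_true (_ == _) |- _ => apply (elimT eqP) in H
 | H : (_ < _) = false |- _ => apply negbT in H; rewrite -leqNgt in H
 | H : (_ <= _) = false |- _ => apply negbT in H; rewrite -ltnNge in H
 | H : is_true (~~ (_ < _)) |- _ => rewrite -leqNgt in H
 | H : is_true (~~ (_ <= _)) |- _ => rewrite -ltnNge in H
 | H : is_true (_ && _) |- _ => let H1 := fresh in let H2 := fresh in destruct (andP H) as [H1 H2]; clear H
 | |- is_true (_ && _) => apply/andP; split
 | |- is_true (_ <= _) => apply/leP
 | |- is_true (_ < _) => apply/ltP
 | |- is_true (_ == _) => apply/eqP
 end; unfold addn, subn, muln, addn_rec, subn_rec, muln_rec in *; lia.

Lemma mod_cases x k : 0 < k -> x < 2 * k ->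
  (x < k /\ x %% k = x) \/ (k <= x /\ x %% k = x - k).
Proof.
move=> k0 hx; case: (ltnP x k) => h.
  by left; rewrite modn_small.
right; split => //.
rewrite {1}(_ : x = (x - k) + k); last by rewrite subnK.
rewrite modnDr modn_small //; mlia.
Qed.

Definition seg (u : seq bool) c c' := take (c' - c) (drop c u).

Lemma seg_size u c c' : c <= c' -> c' <= size u -> size (seg u c c') = c' - c.
Proof. move=> h1 h2; rewrite /seg size_take size_drop; case: ifP => h; mlia. Qed.

Lemma seg_nth u c c' i : i < c' - c -> nth false (seg u c c') i = nth false u (c + i).
Proof. by move=> h; rewrite /seg nth_take // nth_drop. Qed.

Lemma Sk_size k v : Sk k v -> size v = k \/ size v = k.-1.
Proof. by rewrite /Sk => /orP[/andP[/andP[/eqP-> _] _]|/andP[/andP[/eqP-> _] _]]; auto. Qed.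

Lemma notS_mono k x : 1 <= k -> ~~ Sk k (nseq k.-1 x).
Proof.
move=> hk; rewrite /Sk size_nseq negb_or; apply/andP; split.
  by rewrite (_ : (k.-1 == k) = false) //; apply/eqP; mlia.
by case: x; rewrite /la /lb !eqxx /= ?andbF.
Qed.

Lemma notS_ba k : 1 <= k -> ~~ Sk k (lb :: nseq k.-1 la).
Proof.
move=> hk; rewrite /Sk /= size_nseq negb_or eqxx /= andbF /=.
by rewrite (_ : (k.-1.+1 == k.-1) = false) //; apply/eqP; mlia.
Qed.

Lemma notS_bba k : 1 <= k -> ~~ Sk k (rcons (nseq k.-1 lb) la).
Proof.
move=> hk; rewrite /Sk /= size_rcons size_nseq negb_or eqxx /= andbF /=.
by rewrite (_ : (k.-1.+1 == k.-1) = false) //; apply/eqP; mlia.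
Qed.

Definition blk k i := nseq (k + i) la ++ nseq (2 * k - 3 - i) lb ++ nseq k la ++ nseq k.-1 lb.
Definition Inv k i d := (1 <= d /\ d <= k - 1 - i /\ 2 <= k - 1 - i \/ d = k.-1)%coq_nat.

Definition W k := lb :: nseq k la ++ nseq k.-1 lb ++ flatten (map (blk k) (iota 1 (k - 3))) ++ [:: la].

Section Cuts.
Variables (k : nat) (u : seq bool) (cut : nat -> bool).
Hypothesis hk : 4 <= k.
Hypothesis Hc0 : cut 0.
Hypothesis HcN : cut (size u).
Hypothesis Hcle : forall c, cut c -> c <= size u.
Hypothesis Hgap : forall c c', cut c -> cut c' -> c < c' ->
  (forall q, c < q < c' -> ~~ cut q) -> Sk k (seg u c c').

Lemma nextcut c : cut c -> c < size u ->
  exists c', [/\ cut c', c < c' & forall q, c < q < c' -> ~~ cut q].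
Proof.
move=> hc hcN.
have ex : exists n, (c < n) && cut n by exists (size u); rewrite hcN HcN.
case: (ex_minnP ex) => m /andP[h1 h2] hmin.
exists m; split => // q /andP[hq1 hq2]; apply/negP => cq.
have := hmin q; rewrite hq1 cq => /(_ isT) ?; mlia.
Qed.

Lemma gap_size c c' : cut c -> cut c' -> c < c' ->
  (forall q, c < q < c' -> ~~ cut q) -> c' - c = k.-1 \/ c' - c = k.
Proof.
move=> hc hc' hlt hb; have := Hgap hc hc' hlt hb => /Sk_size.
rewrite seg_size ?Hcle //; last by apply ltnW.
by case; auto.
Qed.

Definition state p d := d <= p /\ cut (p - d) /\ forall q, p - d < q <= p -> ~~ cut q.

Lemma state_ex p : p <= size u -> exists d, state p d.
Proof.
move=> hp.
have ex : exists n, (n <= p) && cut n by exists 0; rewrite Hc0.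
have bnd : forall n, (n <= p) && cut n -> n <= p by move=> n /andP[].
case: (ex_maxnP ex bnd) => m /andP[h1 h2] hmax.
exists (p - m); split; first by apply leq_subr.
rewrite subKn //; split => // q /andP[hq1 hq2]; apply/negP => cq.
have := hmax q; rewrite hq2 cq => /(_ isT) ?; mlia.
Qed.

Definition run x s e := forall i, s <= i < e -> nth false u i = x.

Lemma seg_mono x c c' : run x c c' -> c <= c' -> c' <= size u -> seg u c c' = nseq (c' - c) x.
Proof.
move=> hr h1 h2; apply: (@eq_from_nth _ false); first by rewrite seg_size // size_nseq.
move=> i; rewrite seg_size // => hi; rewrite seg_nth // nth_nseq hi hr //; mlia.
Qed.

Lemma run_mod x s e f dout : run x s e -> e <= size u -> s <= f <= e -> cut f ->
  state e dout -> dout = (e - f) %% k.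
Proof.
move=> hr he; move: f.
suff H: forall n f, e - f <= n -> s <= f <= e -> cut f -> state e dout -> dout = (e - f) %% k.
  by move=> f; apply (H (e - f)).
case: (state_ex he) => d0 _.
elim=> [|n IH] f hn /andP[hf1 hf2] cf [hd1 [hd2 hd3]].
- have ef : f = e by mlia.
  subst f; rewrite subnn mod0n.
  case: (posnP dout) => // dp; suff: ~~ cut e by rewrite cf.
  apply hd3; mlia.
- case: (ltnP f e) => fe; last first.
    have ef : f = e by mlia.
    subst f; rewrite subnn mod0n.
    case: (posnP dout) => // dp; suff: ~~ cut e by rewrite cf.
    apply hd3; mlia.
  have [f' [cf' ff' hb]] := nextcut cf (leq_trans fe he).
  case: (leqP f' e) => hf'.
  + have [g1|g2] := gap_size cf cf' ff' hb.
    * have hs : seg u f f' = nseq (f' - f) x.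
        apply seg_mono; [move=> i /andP[i1 i2]; apply hr; mlia | mlia | by apply Hcle].
      have := Hgap cf cf' ff' hb; rewrite hs.
      by rewrite g1 (negbTE (notS_mono x _)) //; mlia.
    * have -> : e - f = (e - f') + k by mlia.
      rewrite modnDr; apply: (IH f'); [mlia | mlia | exact cf' | by split].
  + have hfd : f <= e - dout.
      case: (leqP f (e - dout)) => // h; suff: ~~ cut f by rewrite cf.
      apply hd3; mlia.
    have hfd2 : e - dout = f.
      case: (ltnP f (e - dout)) => h; last by mlia.
      suff: ~~ cut (e - dout) by rewrite hd2.
      apply hb; mlia.
    have [g1|g2] := gap_size cf cf' ff' hb;
    rewrite modn_small; mlia.
Qed.

Lemma run_step x s e d dout : run x s e -> k.-1 <= e - s -> e <= size u -> s <= e ->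
  state s d -> state e dout ->
  (d = 0 /\ dout = (e - s) %% k) \/
  exists g, [/\ g = k.-1 \/ g = k, d < g, 0 < d, Sk k (seg u (s - d) (s - d + g))
             & dout = (e - s + d - g) %% k].
Proof.
move=> hr hL he hse [hd1 [hd2 hd3]] hst.
case: (posnP d) => hd.
  left; split => //; subst d; rewrite subn0 in hd2.
  apply: (run_mod hr he _ hd2 hst); mlia.
right.
have hc : s - d < size u by mlia.
have [c' [cc' hlt hb]] := nextcut hd2 hc.
have hc's : s < c'.
  case: (ltnP s c') => // h; suff: ~~ cut c' by rewrite cc'.
  apply hd3; mlia.
have hg := gap_size hd2 cc' hlt hb.
exists (c' - (s - d)).
have ec : s - d + (c' - (s - d)) = c' by rewrite subnKC // ltnW.
rewrite ec; split => //.
- mlia.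
- by apply Hgap.
- rewrite (run_mod hr he _ cc' hst); last by mlia.
  congr (_ %% _); mlia.
Qed.

Lemma excl_ba c : nth false u c = lb -> run la c.+1 (c + k) -> c + k <= size u ->
  ~~ Sk k (seg u c (c + k)).
Proof.
move=> h1 h2 h3.
have -> : seg u c (c + k) = lb :: nseq k.-1 la.
  apply: (@eq_from_nth _ false); first by rewrite seg_size ?leq_addr //= size_nseq; mlia.
  move=> i; rewrite seg_size ?leq_addr // => hi; rewrite seg_nth //.
  case: i hi => [|i] hi; first by rewrite addn0.
  rewrite /= nth_nseq (_ : i < k.-1); last by mlia.
  apply h2; mlia.
apply notS_ba; mlia.
Qed.

Lemma excl_bba c : run lb c (c + k.-1) -> nth false u (c + k.-1) = la -> c + k <= size u ->
  ~~ Sk k (seg u c (c + k)).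
Proof.
move=> h1 h2 h3.
have -> : seg u c (c + k) = rcons (nseq k.-1 lb) la.
  apply: (@eq_from_nth _ false); first by rewrite seg_size ?leq_addr // size_rcons size_nseq; mlia.
  move=> i; rewrite seg_size ?leq_addr // => hi; rewrite seg_nth //.
  rewrite nth_rcons size_nseq nth_nseq.
  case: (ltnP i k.-1) => h; first by apply h1; mlia.
  have -> : i = k.-1 by mlia.
  by rewrite eqxx.
apply notS_bba; mlia.
Qed.

Lemma run_sub x s e s' e' : run x s e -> s <= s' -> e' <= e -> run x s' e'.
Proof. move=> h h1 h2 i /andP[i1 i2]; apply h; mlia. Qed.

Lemma aRun_first s e d dout : nth false u s.-1 = lb -> 1 <= s -> run la s e -> k.-1 <= e - s ->
  e <= size u -> state s d -> state e dout ->
  (d = 0 /\ dout = (e - s) %% k) \/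
  exists g, [/\ g = k.-1 \/ g = k, d < g, 0 < d, ~ (d = 1 /\ g = k)
             & dout = (e - s + d - g) %% k].
Proof.
move=> hb hs hr hL he hst hst'.
have hse : s <= e by mlia.
case: (run_step hr hL he hse hst hst') => [h|[g [g1 g2 g3 g4 g5]]]; [by left | right].
exists g; split => //.
case=> d1 gk; subst d g.
move: g4; apply/negP.
have -> : s - 1 = s.-1 by rewrite subn1.
apply excl_ba => //.
  by apply: (run_sub hr); mlia.
mlia.
Qed.

Lemma aRun_long s e d dout : run lb (s - k.-1) s -> k.-1 <= s -> run la s e -> k.-1 <= e - s ->
  e <= size u -> state s d -> state e dout ->
  (d = 0 /\ dout = (e - s) %% k) \/
  exists g, [/\ g = k.-1 \/ g = k, d < g, 0 < d, ~ (d = 1 /\ g = k) /\ ~ (d = k.-1 /\ g = k)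
             & dout = (e - s + d - g) %% k].
Proof.
move=> hb hs hr hL he hst hst'.
have hse : s <= e by mlia.
case: (run_step hr hL he hse hst hst') => [h|[g [g1 g2 g3 g4 g5]]]; [by left | right].
exists g; split => //; split.
  case=> d1 gk; subst d g.
  move: g4; apply/negP.
  have -> : s - 1 = s.-1 by rewrite subn1.
  apply excl_ba => //.
  - apply hb; mlia.
  - by apply: (run_sub hr); mlia.
  - mlia.
case=> d1 gk; subst d g.
move: g4; apply/negP.
apply excl_bba => //.
- by apply: (run_sub hb); mlia.
- apply hr; mlia.
- mlia.
Qed.
Ltac modsolve H :=
  match type of H with _ = ?X %% ?K =>
    let m1 := fresh "m" in let m2 := fresh "m" in
    have [[m1 m2]|[m1 m2]] := @mod_cases X K ltac:(mlia) ltac:(mlia); rewrite m2 in H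
  end.

Lemma T0 s e : nth false u s.-1 = lb -> 1 <= s -> run la s e -> e - s = k -> e <= size u ->
  forall dout, state e dout -> (dout = 0 \/ 2 <= dout /\ dout <= k - 1)%coq_nat.
Proof.
move=> hb hs hr hL he dout hout.
have [d hd] := state_ex (p := s) ltac:(mlia).
case: (aRun_first hb hs hr ltac:(mlia) he hd hout) => [[h1 h2]|[g [g1 g2 g3 g4 g5]]].
  rewrite hL modnn in h2; mlia.
rewrite hL in g5; modsolve g5; mlia.
Qed.

Lemma T1 i s e : run lb (s - k.-1) s -> k.-1 <= s -> run la s e -> e - s = k + i -> e <= size u ->
  i <= k - 3 ->
  (forall d, state s d -> (1 <= d /\ d <= k - 1 - i /\ 2 <= k - 1 - i \/ d = k.-1)%coq_nat) ->
  forall dout, state e dout -> (dout = 0 \/ i + 2 <= dout /\ dout <= k - 1)%coq_nat.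
Proof.
move=> hb hs hr hL he hi hin dout hout.
have [d hd] := state_ex (p := s) ltac:(mlia).
have hP := hin d hd.
case: (aRun_long hb hs hr ltac:(mlia) he hd hout) => [[h1 h2]|[g [g1 g2 g3 [g4 g4'] g5]]].
  mlia.
rewrite hL in g5; modsolve g5; mlia.
Qed.

Lemma T2 i s e : run lb s e -> e - s = 2 * k - 3 - i -> e <= size u -> i <= k - 3 ->
  (forall d, state s d -> (d = 0 \/ i + 2 <= d /\ d <= k - 1)%coq_nat) ->
  forall dout, state e dout -> (dout <= k - 3 - i \/ dout = k.-1)%coq_nat.
Proof.
move=> hr hL he hi hin dout hout.
have [d hd] := state_ex (p := s) ltac:(mlia).
have hP := hin d hd.
case: (run_step hr ltac:(mlia) he ltac:(mlia) hd hout) => [[h1 h2]|[g [g1 g2 g3 g4 g5]]].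
  rewrite hL in h2; modsolve h2; mlia.
rewrite hL in g5; modsolve g5; mlia.
Qed.

Lemma T3 i s e : run lb (s - k.-1) s -> k.-1 <= s -> run la s e -> e - s = k -> e <= size u ->
  i <= k - 3 ->
  (forall d, state s d -> (d <= k - 3 - i \/ d = k.-1)%coq_nat) ->
  forall dout, state e dout -> (dout = 0 \/ 2 <= dout /\ dout <= k - 2 - i)%coq_nat.
Proof.
move=> hb hs hr hL he hi hin dout hout.
have [d hd] := state_ex (p := s) ltac:(mlia).
have hP := hin d hd.
case: (aRun_long hb hs hr ltac:(mlia) he hd hout) => [[h1 h2]|[g [g1 g2 g3 [g4 g4'] g5]]].
  rewrite hL modnn in h2; mlia.
rewrite hL in g5; modsolve g5; mlia.
Qed.

Lemma T4 m s e : run lb s e -> e - s = k.-1 -> e <= size u -> m <= k.-1 ->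
  (forall d, state s d -> (d = 0 \/ 2 <= d /\ d <= m)%coq_nat) ->
  forall dout, state e dout -> ((1 <= dout /\ dout <= m /\ 2 <= m) \/ dout = k.-1)%coq_nat.
Proof.
move=> hr hL he hm hin dout hout.
have [d hd] := state_ex (p := s) ltac:(mlia).
have hP := hin d hd.
case: (run_step hr ltac:(mlia) he ltac:(mlia) hd hout) => [[h1 h2]|[g [g1 g2 g3 g4 g5]]].
  rewrite hL in h2; modsolve h2; mlia.
rewrite hL in g5; modsolve g5; mlia.
Qed.

Lemma Tfin e : run lb (e - k.-1) e -> k.-1 <= e -> nth false u e = la -> e < size u ->
  ~ state e k.-1.
Proof.
move=> hb he ha hN [hd1 [hd2 hd3]].
have [c' [cc' hlt hbt]] := nextcut hd2 ltac:(mlia).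
have hc's : e < c'.
  case: (ltnP e c') => // h; suff: ~~ cut c' by rewrite cc'.
  apply hd3; mlia.
have hS := Hgap hd2 cc' hlt hbt.
have [g1|g2] := gap_size hd2 cc' hlt hbt; first by mlia.
have ec : c' = e - k.-1 + k by mlia.
move: hS; rewrite ec; apply/negP; apply excl_bba.
- by apply: (run_sub hb); mlia.
- by rewrite (_ : e - k.-1 + k.-1 = e) //; mlia.
- mlia.
Qed.

Lemma runl w1 n x w2 s e : u = w1 ++ nseq n x ++ w2 -> s = size w1 -> e = size w1 + n -> run x s e.
Proof.
move=> hu -> -> i /andP[i1 i2]; rewrite hu nth_cat ltnNge i1 /=.
have h : i - size w1 < n by mlia.
by rewrite nth_cat size_nseq h nth_nseq h.
Qed.

Lemma Tblock i pre post : u = pre ++ blk k i ++ post -> 1 <= i -> i <= k - 3 ->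
  run lb (size pre - k.-1) (size pre) -> k.-1 <= size pre ->
  (forall d, state (size pre) d -> Inv k i d) ->
  forall d, state (size pre + (5 * k - 4)) d -> Inv k (i + 1) d.
Proof.
move=> hu hi1 hi2 hb hp hin.
set p := size pre.
have hsz : p + (5 * k - 4) <= size u.
  rewrite hu /blk !size_cat !size_nseq; mlia.
have a1 : run la p (p + (k + i)).
  apply: (runl (w1 := pre) (w2 := nseq (2 * k - 3 - i) lb ++ nseq k la ++ nseq k.-1 lb ++ post)) => //.
  by rewrite hu /blk -!catA.
have b1 : run lb (p + (k + i)) (p + (3 * k - 3)).
  apply: (runl (w1 := pre ++ nseq (k + i) la) (w2 := nseq k la ++ nseq k.-1 lb ++ post)).
  - by rewrite hu /blk -!catA.
  - by rewrite size_cat size_nseq.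
  - rewrite size_cat size_nseq; mlia.
have a2 : run la (p + (3 * k - 3)) (p + (4 * k - 3)).
  apply: (runl (w1 := pre ++ nseq (k + i) la ++ nseq (2 * k - 3 - i) lb) (w2 := nseq k.-1 lb ++ post)).
  - by rewrite hu /blk -!catA.
  - rewrite !size_cat !size_nseq; mlia.
  - rewrite !size_cat !size_nseq; mlia.
have b2 : run lb (p + (4 * k - 3)) (p + (5 * k - 4)).
  apply: (runl (w1 := pre ++ nseq (k + i) la ++ nseq (2 * k - 3 - i) lb ++ nseq k la) (w2 := post)).
  - by rewrite hu /blk -!catA.
  - rewrite !size_cat !size_nseq; mlia.
  - rewrite !size_cat !size_nseq; mlia.
have H1 := T1 (i := i) hb hp a1 ltac:(mlia) ltac:(mlia) hi2 hin.
have H2 := T2 (i := i) b1 ltac:(mlia) ltac:(mlia) hi2 H1.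
have H3 := T3 (i := i) (run_sub (s' := p + (3 * k - 3) - k.-1) (e' := p + (3 * k - 3)) b1 ltac:(mlia) ltac:(mlia)) ltac:(mlia) a2 ltac:(mlia) ltac:(mlia) hi2 H2.
have H4 := T4 (m := k - 2 - i) b2 ltac:(mlia) ltac:(mlia) ltac:(mlia) H3.
move=> d hd; have := H4 d hd; rewrite /Inv; mlia.
Qed.

Lemma size_blk i : i <= k - 3 -> size (blk k i) = 5 * k - 4.
Proof. move=> hi; rewrite /blk !size_cat !size_nseq; mlia. Qed.

Lemma size_blks j i : i + j <= k - 2 -> size (flatten (map (blk k) (iota i j))) = j * (5 * k - 4).
Proof.
elim: j i => [|j IH] i hij //=.
rewrite size_cat size_blk; last by mlia.
rewrite IH; last by mlia.
rewrite mulSn; done.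
Qed.

Lemma Tblocks j i pre post : u = pre ++ flatten (map (blk k) (iota i j)) ++ post -> 1 <= i ->
  i + j <= k - 2 -> run lb (size pre - k.-1) (size pre) -> k.-1 <= size pre ->
  (forall d, state (size pre) d -> Inv k i d) ->
  run lb (size pre + j * (5 * k - 4) - k.-1) (size pre + j * (5 * k - 4)) /\
  forall d, state (size pre + j * (5 * k - 4)) d -> Inv k (i + j) d.
Proof.
elim: j i pre => [|j IH] i pre hu hi hij hb hp hin.
  by rewrite mul0n addn0 addn0.
have hu' : u = pre ++ blk k i ++ (flatten (map (blk k) (iota i.+1 j)) ++ post).
  by rewrite hu /= -!catA.
have HB := Tblock hu' hi ltac:(mlia) hb hp hin.
have hu2 : u = (pre ++ blk k i) ++ flatten (map (blk k) (iota i.+1 j)) ++ post.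
  by rewrite hu' -!catA.
have hsz : size (pre ++ blk k i) = size pre + (5 * k - 4) by rewrite size_cat size_blk //; mlia.
have hb2 : run lb (size (pre ++ blk k i) - k.-1) (size (pre ++ blk k i)).
  apply: (runl (w1 := pre ++ nseq (k + i) la ++ nseq (2 * k - 3 - i) lb ++ nseq k la) (w2 := flatten (map (blk k) (iota i.+1 j)) ++ post)).
  - by rewrite hu2 /blk -!catA.
  - rewrite hsz !size_cat !size_nseq; mlia.
  - rewrite hsz !size_cat !size_nseq; mlia.
have := IH i.+1 (pre ++ blk k i) hu2 ltac:(mlia) ltac:(mlia) hb2 ltac:(rewrite hsz; mlia).
rewrite addn1 in HB; rewrite hsz => /(_ HB) [h1 h2].
have e1 : size pre + (5 * k - 4) + j * (5 * k - 4) = size pre + j.+1 * (5 * k - 4)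
  by rewrite mulSn -addnA.
have e2 : i.+1 + j = i + j.+1 by rewrite addSnnS.
by rewrite -e1 -e2; split.
Qed.

Lemma main_contra x y : u = x ++ W k ++ y -> False.
Proof.
move=> hu.
have hbs := size_blks (j := k - 3) (i := 1) ltac:(mlia).
have hsu : size x + (2 * k + (k - 3) * (5 * k - 4) + 1) <= size u.
  rewrite hu /W !size_cat /= !size_cat !size_nseq hbs /=; mlia.
set pre0 := x ++ lb :: nseq k la ++ nseq k.-1 lb.
have hp0 : size pre0 = size x + 2 * k by rewrite /pre0 size_cat /= size_cat !size_nseq; mlia.
have a0 : run la (size x).+1 ((size x).+1 + k).
  apply: (runl (w1 := x ++ [:: lb]) (w2 := nseq k.-1 lb ++ flatten (map (blk k) (iota 1 (k - 3))) ++ [:: la] ++ y)).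
  - by rewrite hu /W /= -?catA.
  - by rewrite size_cat addn1.
  - by rewrite size_cat addn1.
have hb0 : nth false u (size x).+1.-1 = lb by rewrite hu nth_cat ltnn subnn.
have H0 := T0 hb0 ltac:(mlia) a0 ltac:(mlia) ltac:(mlia).
have b0 : run lb ((size x).+1 + k) (size pre0).
  apply: (runl (w1 := x ++ lb :: nseq k la) (w2 := flatten (map (blk k) (iota 1 (k - 3))) ++ [:: la] ++ y)).
  - by rewrite hu /W /pre0 /= -?catA.
  - rewrite size_cat /= size_nseq; mlia.
  - rewrite hp0 size_cat /= size_nseq; mlia.
have H1 := T4 (m := k - 1) b0 ltac:(mlia) ltac:(mlia) ltac:(mlia) H0.
have HI : forall d, state (size pre0) d -> Inv k 1 d.
  move=> d hd; have := H1 d hd; rewrite /Inv; mlia.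
have hu' : u = pre0 ++ flatten (map (blk k) (iota 1 (k - 3))) ++ [:: la] ++ y.
  by rewrite hu /W; unfold pre0; rewrite -!catA !cat_cons -!catA.
have [hbF hF] := Tblocks hu' (isT : 0 < 1) ltac:(mlia)
  (run_sub (s' := size pre0 - k.-1) (e' := size pre0) b0 ltac:(mlia) ltac:(mlia))
  ltac:(mlia) HI.
set P := size pre0 + (k - 3) * (5 * k - 4).
have hPN : P < size u by rewrite /P hp0; mlia.
have aF : run la P (P + 1).
  apply: (runl (w1 := pre0 ++ flatten (map (blk k) (iota 1 (k - 3)))) (n := 1) (w2 := y)).
  - by rewrite hu' -!catA.
  - by rewrite size_cat hbs.
  - by rewrite size_cat hbs.
have [d hd] := state_ex (p := P) ltac:(mlia).
have hI := hF d hd.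
have dk : d = k.-1 by move: hI; rewrite /Inv; mlia.
subst d.
apply: (Tfin hbF ltac:(rewrite /P hp0; mlia) _ hPN hd).
apply aF; mlia.
Qed.

End Cuts.

Fixpoint ps (ws : seq (seq bool)) : seq nat :=
  if ws is p :: ws' then 0 :: map (addn (size p)) (ps ws') else [:: 0].

Lemma ps0 ws : 0 \in ps ws.
Proof. by case: ws. Qed.

Lemma psN ws : size (flatten ws) \in ps ws.
Proof.
elim: ws => [|p ws IH] //=; rewrite inE size_cat; apply/orP; right.
by apply: map_f.
Qed.

Lemma psle ws c : c \in ps ws -> c <= size (flatten ws).
Proof.
elim: ws c => [|p ws IH] c /=; first by rewrite inE => /eqP ->.
rewrite inE size_cat => /orP[/eqP -> //|/mapP[c0 h0 ->]].
by rewrite leq_add2l IH.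
Qed.

Lemma psgap k ws : 4 <= k -> all (Sk k) ws -> forall c c', c \in ps ws -> c' \in ps ws -> c < c' ->
  (forall q, c < q < c' -> q \notin ps ws) -> Sk k (seg (flatten ws) c c').
Proof.
move=> hk; elim: ws => [|p ws IH] /=.
  by move=> _ c c'; rewrite !inE => /eqP -> /eqP ->.
move=> /andP[hp hall] c c'.
have sp : 0 < size p by case: (Sk_size hp) => ->; mlia.
rewrite !inE => /orP[/eqP ->|/mapP[c0 h0 ->]] /orP[/eqP ->|/mapP[c0' h0' ->]] //.
- move=> _ hb.
  case: (posnP c0') => hc0'.
    subst c0'; rewrite /seg addn0 subn0 drop0 take_size_cat //.
  have := hb (size p); rewrite inE sp /= -{1}(addn0 (size p)) ltn_add2l hc0' /=.
  have hm : size p \in map (addn (size p)) (ps ws).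
    by rewrite -{1}(addn0 (size p)); apply: map_f; apply ps0.
  by rewrite hm orbT => /(_ isT).
- rewrite ltn_add2l => hlt hb.
  have hb' : forall q, c0 < q < c0' -> q \notin ps ws.
    move=> q hq; apply/negP => hq'.
    have := hb (size p + q); rewrite inE (map_f _ hq') orbT !ltn_add2l hq => /(_ isT).
    done.
  have := IH hall c0 c0' h0 h0' hlt hb'.
  by rewrite /seg subnDl addnC -drop_drop drop_size_cat.
Qed.

Lemma W_unc k : 4 <= k -> uncompletable (Sk k) (W k).
Proof.
move=> hk [u0 [[ws [hall hu0]] hinf]]; subst u0.
case/infixP: hinf => x [y hu].
exact: (main_contra (cut := fun c => c \in ps ws) hk (ps0 ws) (psN ws) (@psle ws)
  (psgap hk hall) hu).
Qed.

From Stdlib Require Import Psatz.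

Lemma W_size k : 4 <= k -> size (W k) = 5 * k ^ 2 + 13 - 17 * k.
Proof.
move=> hk; rewrite /W /= !size_cat !size_nseq (size_blks hk (j := k - 3) (i := 1)) /=; last by mlia.
rewrite (_ : k ^ 2 = k * k); last by rewrite expnS expn1.
move/leP: hk => hk.
unfold addn, subn, muln, addn_rec, subn_rec, muln_rec in *.
nia.
Qed.

Unset Implicit Arguments.

Theorem theorem1 (k : nat) (hk : 4 <= k) :
  ~ complete (Sk k) /\
  exists w : seq bool, size w = 5 * k ^ 2 + 13 - 17 * k /\ uncompletable (Sk k) w.
Proof.
split.
  by move=> hc; apply: (W_unc hk (hc (W k))).
exists (W k); split; [exact: W_size | exact: W_unc].
Qed.
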